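(* Let $L$ be a finite distributive lattice and let $m$ be the maximum size of an antichain in $\operatorname{Mi}(L)$. Then for every $k\ge0$, $$q_k(L)=\sum_{j=k}^m\binom jk d_j^-(L),\qquad d_k^-(L)=\sum_{j=k}^m(-1)^{j-k}\binom jk q_j(L).$$
   Context: $\operatorname{Mi}(L)$ is the set of meet-irreducible elements of $L$, as a poset under the order of $L$. For a finite lattice $M$ and $k\ge0$, $q_k(M)$ is the number of convex sublattices (intervals) of $M$ isomorphic to the Boolean lattice $\mathbf{B}_k$ with $2^k$ elements. For $a\in M$, $\deg^-_M(a)$ is the number of elements of $M$ covering $a$, and $d_k^-(M)$ is the number of $a\in M$ with $\deg^-_M(a)=k$. *)

(* Defs.v *)
From mathcomp Require Import all_boot all_order all_algebra.
Set Implicit Arguments. Unset Strict Implicit. Unset Printing Implicit Defensive.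
Import Order.Theory.
Local Open Scope order_scope.

Section Defs.
Context {disp : Order.disp_t} {L : finTBDistrLatticeType disp}.

Definition covers (a b : L) : bool :=
  (a < b) && [forall c : L, ~~ ((a < c) && (c < b))].

Definition deg_down (a : L) : nat := #|[set b : L | covers a b]|.

Definition d_down (k : nat) : nat := #|[set a : L | deg_down a == k]|.

Definition meet_irr (a : L) : bool :=
  (a != \top) && [forall b : L, forall c : L, (a == b `&` c) ==> ((a == b) || (a == c))].

Definition Mi : {set L} := [set a : L | meet_irr a].

Definition antichain (A : {set L}) : bool :=
  [forall x in A, forall y in A, (x != y) ==> ~~ ((x <= y) || (y <= x))].

Definition max_antichain_Mi : nat :=
  \max_(A : {set L} | (A \subset Mi) && antichain A) #|A|.

(* the interval [a,b] is order-isomorphic to the Boolean lattice B_k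
   (subsets of a k-element set ordered by inclusion) *)
Definition interval_boolean (k : nat) (a b : L) : bool :=
  (a <= b) &&
  [exists f : {ffun {set 'I_k} -> L},
     [&& [forall S, (a <= f S) && (f S <= b)],
         [forall x : L, ((a <= x) && (x <= b)) ==> [exists S, f S == x]] &
         [forall S, forall S', (f S <= f S') == (S \subset S')]]].

Definition q_bool (k : nat) : nat :=
  #|[set p : L * L | interval_boolean k p.1 p.2]|.

End Defs.

(* Main.v *)
Require Import Defs.
From mathcomp Require Import all_boot all_order all_algebra zify.
Set Implicit Arguments. Unset Strict Implicit. Unset Printing Implicit Defensive.
Import GRing.Theory.
Local Open Scope ring_scope.
Lemma aux1 (A B x y z : nat) : (A*B*(x*y*z) = B*((A*(x*y))*z))%N.
Proof. nia. Qed.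
Lemma aux2 (A B x y z : nat) : (A*B*(x*y*z) = A*x*(B*(y*z)))%N.
Proof. nia. Qed.
Lemma altsum N : \sum_(0 <= i < N.+1) (-1) ^+ i * ('C(N, i))%:Z = (N == 0%N)%:Z.
Proof.
have e := exprDn 1 (-1 : int) N.
rewrite addrN in e.
rewrite big_mkord; transitivity ((0 : int) ^+ N); last by rewrite expr0n; case: (N == 0%N).
rewrite e; apply: eq_bigr => i _; by rewrite expr1n mul1r pmulrn mulrzz.
Qed.

Lemma binC2 n k i : (i + k <= n)%N -> ('C(i + k, k) * 'C(n, i + k) = 'C(n, k) * 'C(n - k, i))%N.
Proof.
move=> h.
have h1 := bin_fact (leq_addl i k); rewrite addnK in h1.
have h2 := bin_fact h.
have h3 := bin_fact (leq_trans (leq_addl i k) h).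
have hk : (k <= n)%N := leq_trans (leq_addl i k) h.
have h4 : (i <= n - k)%N by rewrite leq_subRL // addnC.
have h5 := bin_fact h4.
have er : (n - k - i = n - (i + k))%N by rewrite -subnDA addnC.
rewrite er in h5.
apply/eqP; rewrite -(eqn_pmul2r (_ : 0 < k`! * i`! * (n - (i + k))`!)%N); last by rewrite !muln_gt0 !fact_gt0.
apply/eqP; transitivity n`!.
  by rewrite -h2 -h1 aux1.
by rewrite -h3 -h5 aux2 mulnA.
Qed.

Lemma sel_nat (F : nat -> nat) k M n : (n < M)%N ->
  (\sum_(k <= j < M) F j * (n == j) = if k <= n then F n else 0)%N.
Proof.
move=> nM; case: ifP => kn.
  rewrite (big_rem n) ?mem_index_iota ?kn ?nM //= eqxx muln1 big1_seq ?addn0 //.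
  move=> j /andP[_]; rewrite mem_rem_uniq ?iota_uniq // inE => /andP[jn _].
  by rewrite eq_sym (negbTE jn) muln0.
rewrite big1_seq // => j /andP[_]; rewrite mem_index_iota => /andP[kj _].
case: eqP => [e|]; last by rewrite muln0.
by subst j; rewrite kj in kn.
Qed.

Lemma ident k m n : (n <= m)%N ->
  \sum_(k <= j < m.+1) (-1) ^+ (j - k) * ('C(j, k))%:Z * ('C(n, j))%:Z = (n == k)%:Z.
Proof.
move=> nm; case: (ltnP n k) => [nk | kn].
  rewrite big1_seq; last first.
    move=> j /andP[_]; rewrite mem_index_iota => /andP[kj _].
    by rewrite (bin_small (leq_trans nk kj)) mulr0.
  by rewrite (ltn_eqF nk).
rewrite (@big_cat_nat _ _ _ n.+1) //=; last by apply: leqW.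
rewrite [X in _ + X]big1_seq ?addr0; last first.
  move=> j /andP[_]; rewrite mem_index_iota => /andP[nj _].
  by rewrite (bin_small nj) mulr0.
rewrite -{1}(add0n k) big_addn subSn //.
transitivity (\sum_(0 <= i < (n - k).+1) ('C(n, k))%:Z * ((-1) ^+ i * ('C(n - k, i))%:Z)).
  rewrite !big_nat; apply: eq_bigr => i /andP[_ ilt].
  rewrite addnK -mulrA -PoszM binC2; last by rewrite addnC -leq_subRL // -ltnS.
  by rewrite PoszM mulrCA.
rewrite -mulr_sumr altsum subn_eq0.
case: (eqVneq n k) => [->|nk]; first by rewrite leqnn binn mulr1.
have : (n <= k)%N = false by apply/negbTE; rewrite -ltnNge ltn_neqAle eq_sym nk kn.
by move=> ->; rewrite mulr0.
Qed.

Local Close Scope ring_scope.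
Import Order.Theory.
Local Open Scope order_scope.

Section Lat.
Context {disp : Order.disp_t} {L : finTBDistrLatticeType disp}.
Implicit Types (a b c x : L) (S : {set L}).

Definition cov a := [set c | covers a c].

Lemma coversP a c : covers a c -> a < c /\ (forall x, a < x -> x < c -> False).
Proof.
case/andP=> ac /forallP H; split=> // x h1 h2.
by move: (H x); rewrite h1 h2.
Qed.

Lemma cov_meet_le a c x : covers a c -> a <= x -> c `&` x = if c <= x then c else a.
Proof.
move=> /coversP[ac H] ax; case: ifP => cx; first exact/meet_idPl.
have h1 : a <= c `&` x by rewrite lexI (ltW ac) ax.
have h2 : c `&` x < c by rewrite lt_neqAle leIl andbT; apply/negP=> /eqP e; move: cx; rewrite -e leIr.
move: h1; rewrite le_eqVlt => /orP[/eqP -> //|h]; exfalso; exact: H h h2.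
Qed.

Lemma cov_meet a c s : covers a c -> covers a s -> c != s -> c `&` s = a.
Proof.
move=> hc hs ncs; rewrite (cov_meet_le hc); last by case/coversP: hs => /ltW.
case: ifP => // cs; exfalso.
case/coversP: hs => _ H; case/coversP: hc => ac _.
by apply: (H c ac); rewrite lt_neqAle ncs cs.
Qed.

Definition J a S := a `|` \join_(s in S) s.

Lemma meet_join_big x S : x `&` \join_(s in S) s = \join_(s in S) (x `&` s).
Proof.
apply: (big_endo (fun y => x `&` y)); first by move=> y z; rewrite meetUr.
by rewrite meetx0.
Qed.

Lemma meet_J a x S : a <= x -> S \subset cov a ->
  x `&` J a S = J a [set s in S | s <= x].
Proof.
move=> ax Sc; apply/eqP; rewrite eq_le; apply/andP; split.
  rewrite /J meetUr meet_join_big (meet_idPr ax) leUx leUl /=.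
  apply/joinsP => s sS.
  have cs : covers a s by move/subsetP: Sc => /(_ s sS); rewrite inE.
  rewrite meetC (cov_meet_le cs ax); case: ifP => sx; last exact: leUl.
  by apply: le_trans (leUr _ _); apply: joins_sup; rewrite inE sS sx.
rewrite lexI; apply/andP; split.
  rewrite /J leUx ax /=; apply/joinsP => s; rewrite inE => /andP[].
  by [].
rewrite /J leU2 //; apply: le_joins; apply/subsetP => s; rewrite inE => /andP[].
by [].
Qed.

Lemma key a c S : covers a c -> S \subset cov a -> c <= J a S -> c \in S.
Proof.
move=> hc Sc cJ; have := meet_J (ltW (proj1 (coversP hc))) Sc.
rewrite (meet_idPl cJ) => e.
apply/negPn/negP => cS.
have : c <= a.
  rewrite e /J leUx lexx /=; apply/joinsP => s; rewrite inE => /andP[sS sc].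
  have cs : covers a s by move/subsetP: Sc => /(_ s sS); rewrite inE.
  case: (eqVneq c s) => [ecs|ncs]; first by subst s; rewrite sS in cS.
  by rewrite -(cov_meet hc cs ncs) lexI sc lexx.
move=> ca; have := proj1 (coversP hc).
by move/lt_geF; rewrite ca.
Qed.


Lemma J_ge a S : a <= J a S. Proof. exact: leUl. Qed.
Lemma J_mono a S S' : S \subset S' -> J a S <= J a S'.
Proof. by move=> h; rewrite /J leU2 // le_joins. Qed.
Lemma J_in a S s : s \in S -> s <= J a S.
Proof. by move=> h; apply: le_trans (leUr _ _); apply: joins_sup. Qed.

Lemma ib_J a S : S \subset cov a -> interval_boolean #|S| a (J a S).
Proof.
move=> Sc; apply/andP; split; first exact: J_ge.
pose e := (fun i : 'I_#|S| => enum_val i).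
have eS i : e i \in S by apply: enum_valP.
have einj : injective e by apply: enum_val_inj.
have eSc (T : {set 'I_#|S|}) : e @: T \subset cov a.
  by apply/subsetP => s /imsetP[i _ ->]; apply: (subsetP Sc).
apply/existsP; exists [ffun T : {set 'I_#|S|} => J a (e @: T)]; apply/and3P; split.
- apply/forallP => T; rewrite ffunE J_ge /=; apply: J_mono.
  by apply/subsetP => s /imsetP[i _ ->].
- apply/forallP => x; apply/implyP => /andP[ax xb]; apply/existsP.
  exists [set i | e i <= x]; rewrite ffunE; apply/eqP.
  rewrite -[RHS](meet_idPl xb) (meet_J ax Sc); congr J.
  apply/setP => s; rewrite inE; apply/imsetP/andP.
    by case=> i; rewrite inE => ix ->.
  case=> sS sx; exists (enum_rank_in sS s); last by rewrite /e enum_rankK_in.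
  by rewrite inE /e enum_rankK_in.
- apply/forallP => T; apply/forallP => T'; rewrite !ffunE; apply/eqP; apply/idP/idP.
    move=> le; apply/subsetP => i iT.
    have hc : covers a (e i) by have := subsetP Sc _ (eS i); rewrite inE.
    have := key hc (eSc T') (le_trans (J_in a (imset_f e iT)) le).
    by rewrite mem_imset.
  by move=> h; apply: J_mono; apply: imsetS.
Qed.

Lemma ib_inv k a b : interval_boolean k a b ->
  #|[set c in cov a | c <= b]| = k /\ J a [set c in cov a | c <= b] = b.
Proof.
case/andP=> ab /existsP[f /and3P[/forallP hr /forallP hs /forallP ho]].
have ord T T' : (f T <= f T') = (T \subset T').
  by apply/eqP; move: (ho T) => /forallP /(_ T').
have finj : injective f.
  by move=> T T' e; apply/eqP; rewrite eqEsubset -!ord e lexx.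
have surj x : a <= x -> x <= b -> exists T, x = f T.
  by move=> h1 h2; move: (hs x); rewrite h1 h2 => /existsP[T /eqP <-]; exists T.
have fa : f set0 = a.
  have [T eT] := surj a (lexx a) ab.
  apply/le_anti; rewrite (proj1 (andP (hr set0))) andbT.
  by rewrite eT ord sub0set.
have fb : f setT = b.
  have [T eT] := surj b ab (lexx b).
  apply/le_anti; rewrite (proj2 (andP (hr setT))) /=.
  by rewrite eT ord subsetT.
have ai i : a < f [set i].
  rewrite -fa lt_neqAle ord sub0set andbT.
  by apply/negP => /eqP/finj/setP/(_ i); rewrite !inE eqxx.
have eS : [set c in cov a | c <= b] = [set f [set i] | i in [set: 'I_k]].
  apply/setP => c; rewrite !inE; apply/idP/imsetP.
    case/andP=> hc cb; case/coversP: (hc) => ac H.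
    have [T eT] := surj c (ltW ac) cb.
    have : T != set0 by apply: contraTneq ac => eT0; rewrite eT eT0 fa ltxx.
    case/set0Pn => i iT; exists i => //.
    have le : f [set i] <= c by rewrite eT ord sub1set.
    move: le; rewrite le_eqVlt => /orP[/eqP //| lt]; exfalso; exact: H _ (ai i) lt.
  case=> i _ ->; rewrite (proj2 (andP (hr _))) andbT.
  apply/andP; split; first exact: ai.
  apply/forallP => x; apply/negP => /andP[ax xc].
  have [T eT] := surj x (ltW ax) (le_trans (ltW xc) (proj2 (andP (hr _)))).
  have := ltW xc; rewrite eT ord subset1 => /orP[] /eqP eT1.
    by move: xc; rewrite eT eT1 ltxx.
  by move: ax; rewrite eT eT1 fa ltxx.
have cardS : #|[set c in cov a | c <= b]| = k.
  rewrite eS card_imset ?cardsT ?card_ord //.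
  by move=> i j /finj /set1_inj.
split => //; apply/le_anti/andP; split.
  rewrite /J leUx ab /=; apply/joinsP => s; rewrite !inE => /andP[_ ->].
  by [].
have Jb : J a [set c in cov a | c <= b] <= b.
  by rewrite /J leUx ab /=; apply/joinsP => s; rewrite !inE => /andP[_ ->].
have [T eT] := surj (J a [set c in cov a | c <= b]) (J_ge _ _) Jb.
rewrite eT -fb ord; apply/subsetP => i _.
rewrite -sub1set -ord -eT; apply: J_in; rewrite eS; exact: imset_f.
Qed.

Lemma card_ib k a : #|[set b | interval_boolean k a b]| = 'C(deg_down a, k).
Proof.
have -> : [set b | interval_boolean k a b] =
    J a @: [set S : {set L} | S \subset cov a & #|S| == k].
  apply/setP => b; rewrite inE; apply/idP/imsetP.
    move=> h; have [c e] := ib_inv h.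
    exists [set c in cov a | c <= b]; rewrite // inE c eqxx andbT.
    by apply/subsetP => x; rewrite inE => /andP[].
  by case=> S; rewrite inE => /andP[Sc /eqP <-] ->; exact: ib_J.
rewrite card_in_imset ?cards_draws //.
have H S S' : S \subset cov a -> S' \subset cov a -> J a S = J a S' ->
    S \subset S'.
  move=> Sc S'c e; apply/subsetP => c cS.
  have hc : covers a c by have := subsetP Sc _ cS; rewrite inE.
  by apply: key hc S'c _; rewrite -e; exact: J_in.
move=> S S'; rewrite !inE => /andP[Sc _] /andP[S'c _] e.
by apply/eqP; rewrite eqEsubset (H _ _ Sc S'c e) (H _ _ S'c Sc (esym e)).
Qed.

Definition Mc a c := arg_max a (fun x => (a <= x) && ~~ (c <= x))
  (fun x => #|[set y | y <= x]|).

Lemma Mc_spec a c : covers a c ->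
  [/\ a <= Mc a c, ~~ (c <= Mc a c) & forall y, Mc a c < y -> c <= y].
Proof.
move=> hc; have ac := proj1 (coversP hc).
have Pa : (a <= a) && ~~ (c <= a) by rewrite lexx (lt_geF ac).
rewrite /Mc; case: (@arg_maxnP _ a (fun x => (a <= x) && ~~ (c <= x)) (fun x => #|[set y | y <= x]|) Pa) => m /andP[am cm] mx.
split=> // y my; apply/negPn/negP => cy.
have := mx y; rewrite (le_trans am (ltW my)) cy /= => /(_ isT).
apply/negP; rewrite -ltnNge; apply: proper_card; apply/properP; split.
  by apply/subsetP => z; rewrite !inE => zm; apply: le_trans zm (ltW my).
by exists y; rewrite !inE ?lexx // lt_geF.
Qed.

Lemma Mc_irr a c : covers a c -> meet_irr (Mc a c).
Proof.
move=> hc; case: (Mc_spec hc) => am cm mx.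
apply/andP; split.
  by apply/eqP => e; move: cm; rewrite e lex1.
apply/forallP => x; apply/forallP => y; apply/implyP => /eqP e.
apply/negPn/negP; rewrite negb_or => /andP[nx ny].
have lx : Mc a c < x by rewrite lt_neqAle nx e leIl.
have ly : Mc a c < y by rewrite lt_neqAle ny e leIr.
by move: cm; rewrite e lexI (mx _ lx) (mx _ ly).
Qed.

Lemma Mc_other a c c' : covers a c -> covers a c' -> c != c' -> c' <= Mc a c.
Proof.
move=> hc hc' ncc; case: (Mc_spec hc) => am cm mx.
apply/negPn/negP => nc'.
have lt : Mc a c < Mc a c `|` c'.
  rewrite lt_neqAle leUl andbT; apply/negP => /eqP e.
  by move: nc'; rewrite e leUr.
have := mx _ lt => cle.
have : c = a.
  rewrite -(meet_idPl cle) meetUr (cov_meet_le hc am) (negbTE cm).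
  by rewrite (cov_meet hc hc' ncc) joinxx.
by move=> e; move: (proj1 (coversP hc)); rewrite e ltxx.
Qed.

Lemma deg_le a : (deg_down a <= @max_antichain_Mi disp L)%N.
Proof.
pose A := [set Mc a c | c in cov a].
have Minj : {in cov a &, injective (Mc a)}.
  move=> c c'; rewrite !inE => hc hc' e; apply/eqP/negPn/negP => ncc.
  have := Mc_other hc hc' ncc; rewrite e.
  by case: (Mc_spec hc') => _ /negbTE ->.
have cA : #|A| = deg_down a by rewrite card_in_imset.
rewrite -cA; apply: (@leq_bigmax_cond _ (fun A : {set L} => (A \subset Mi) && antichain A) (fun A => #|A|) A).
apply/andP; split.
  by apply/subsetP => x /imsetP[c hc ->]; rewrite inE; apply: Mc_irr; rewrite inE in hc.
apply/forallP => x; apply/implyP => /imsetP[c hc ->].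
apply/forallP => y; apply/implyP => /imsetP[c' hc' ->].
apply/implyP => ne.
have ncc : c != c' by apply: contraNneq ne => ->.
rewrite inE in hc; rewrite inE in hc'.
case: (Mc_spec hc) => _ cm _; case: (Mc_spec hc') => _ cm' _.
rewrite negb_or; apply/andP; split; apply/negP => le.
  by move: cm'; rewrite (le_trans (Mc_other hc hc' ncc) le).
have ncc' : c' != c by rewrite eq_sym.
by move: cm; rewrite (le_trans (Mc_other hc' hc ncc') le).
Qed.

End Lat.

Local Close Scope order_scope.

Lemma q_sum disp (L : finTBDistrLatticeType disp) k :
  @q_bool disp L k = \sum_(a : L) 'C(deg_down a, k).
Proof.
transitivity (\sum_(a : L) #|[set b | interval_boolean k a b]|); last first.
  by apply: eq_bigr => a _; rewrite card_ib.
rewrite /q_bool -sum1_card.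
transitivity (\sum_(a : L) \sum_(b : L | interval_boolean k a b) 1); last first.
  by apply: eq_bigr => a _; rewrite -sum1_card; apply: eq_bigl => b; rewrite inE.
rewrite (pair_big_dep xpredT (fun a b => interval_boolean k a b) (fun _ _ => 1)).
by apply: eq_bigl => p; rewrite inE.
Qed.

Local Close Scope order_scope.

Theorem proposition2 (disp : Order.disp_t) (L : finTBDistrLatticeType disp) (k : nat) :
  let m := @max_antichain_Mi disp L in
  @q_bool disp L k = \sum_(k <= j < m.+1) 'C(j, k) * @d_down disp L j
  /\
  ((@d_down disp L k)%:Z =
     \sum_(k <= j < m.+1) (-1) ^+ (j - k) * ('C(j, k))%:Z * (@q_bool disp L j)%:Z)%R.
Proof.
move=> m.
have degm (a : L) : (deg_down a <= m)%N := deg_le a.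
have dd j : @d_down disp L j = (\sum_(a : L) (deg_down a == j))%N.
  rewrite /d_down -sum1_card big_mkcond; apply: eq_bigr => a _.
  by rewrite inE; case: (deg_down a == j).
split.
  rewrite q_sum.
  under [RHS]eq_bigr do rewrite dd big_distrr.
  rewrite exchange_big /=; apply: eq_bigr => a _.
  rewrite sel_nat ?ltnS //; case: ifP => // /negbT; rewrite -ltnNge => h.
  by rewrite bin_small.
have qq j : ((@q_bool disp L j)%:Z = \sum_(a : L) ('C(deg_down a, j))%:Z)%R.
  by rewrite q_sum; apply: (big_morph Posz PoszD).
under [RHS]eq_bigr do rewrite qq mulr_sumr.
rewrite exchange_big /=.
under [RHS]eq_bigr do rewrite (ident k (degm _)).
by rewrite dd; apply: (big_morph Posz PoszD).
Qed.
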